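(* Let $\mathcal K$ be a 2-category, $(t,\mu,\eta)$ a monad on a 0-cell $k$ and $s:k\to k$ a 1-cell. There is a bijective correspondence between (i) monads in the 2-category $\mathrm{EM}^w(\mathcal K)$ on the 0-cell $(t,\mu,\eta)$ whose underlying 1-cell has first component $s$, i.e. triples consisting of a 1-cell $(s,\psi):t\to t$ of $\mathrm{EM}^w(\mathcal K)$, a multiplication 2-cell $\nu:(s,\psi)\circ(s,\psi)\Rightarrow(s,\psi)$ and a unit 2-cell $\vartheta:(k,t)\Rightarrow(s,\psi)$ in $\mathrm{EM}^w(\mathcal K)$ (so $\nu:ss\Rightarrow st$ and $\vartheta:k\Rightarrow st$ in $\mathcal K$) satisfying the monad axioms; and (ii) pre-monads $(st,\Theta,\vartheta)$ in $\mathcal K$ (with the same unit $\vartheta$) such that $\Theta\ast sts\mu=s\mu\ast\Theta t$.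
   Context: Conventions in a 2-category $\mathcal K$: horizontal composition and whiskering by juxtaposition in the order of functor composition; identity 1-cell of $k$ written $k$, identity 2-cell of $V$ written $V$; vertical composition $\ast$ with $\alpha\ast\beta$ meaning $\beta$ then $\alpha$. A monad $(t,\mu,\eta)$ on $k$: $t:k\to k$, $\mu:tt\Rightarrow t$, $\eta:k\Rightarrow t$ with $\mu\ast\mu t=\mu\ast t\mu$, $\mu\ast\eta t=t=\mu\ast t\eta$. A pre-monad is a triple $(m,M,e)$, $m:k\to k$, $M:mm\Rightarrow m$, $e:k\Rightarrow m$, with $M\ast Mm=M\ast mM$, $M\ast em=M\ast me$, $M\ast ee=e$, $M\ast Mm\ast emm=M$. The 2-category $\mathrm{EM}^w(\mathcal K)$: 0-cells are monads in $\mathcal K$; a 1-cell $(t,\mu,\eta)\to(t',\mu',\eta')$ ($t$ on $k$, $t'$ on $k'$) is $(V,\psi)$, $V:k\to k'$, $\psi:t'V\Rightarrow Vt$, with $V\mu\ast\psi t\ast t'\psi=\psi\ast\mu'V$; a 2-cell $(V,\psi)\Rightarrow(W,\phi)$ is $\varrho:V\Rightarrow Wt$ in $\mathcal K$ with $W\mu\ast\varrho t\ast\psi=W\mu\ast\phi t\ast t'\varrho$ and $\varrho=W\mu\ast\phi t\ast\eta'Wt\ast\varrho$. Identity 1-cell on $t$ is $(k,t)$; identity 2-cell on $(W,\phi)$ is $\phi\ast\eta'W$; horizontal composite of 1-cells $(V,\psi):t\to t'$, $(V',\psi'):t'\to t''$ is $(V'V,V'\psi\ast\psi'V)$, of 2-cells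 $\varrho:(V,\psi)\Rightarrow(W,\phi)$, $\varrho':(V',\psi')\Rightarrow(W',\phi')$ is $\varrho'\circ\varrho=W'W\mu\ast W'\varrho t\ast W'\psi\ast\varrho'V$; vertical composite of $\varrho$ and $\tau:(W,\phi)\Rightarrow(U,\theta)$ is $\tau\bullet\varrho=U\mu\ast\tau t\ast\varrho$. These data form a 2-category, in which monads (a 1-cell $m:t\to t$ with 2-cells $\nu:m\circ m\Rightarrow m$, $\vartheta:1_t\Rightarrow m$ satisfying associativity and unit laws w.r.t. $\circ$ and $\bullet$) are meant in (i). *)

(* Defs.v *)
(* a strict 2-category presented as an essentially-algebraic
   (untyped) structure: 1-cells and 2-cells carry source/target maps and the
   composition operations are total, with axioms required only on composable
   data.  This avoids transports along strict associativity of 1-cells. *)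

Record TwoCat := {
  Ob : Type;
  H1 : Type;
  C2 : Type;
  dom : H1 -> Ob;
  cod : H1 -> Ob;
  id1 : Ob -> H1;
  comp1 : H1 -> H1 -> H1;           (* comp1 g f = g f  (f first, then g) *)
  src : C2 -> H1;
  tgt : C2 -> H1;
  id2 : H1 -> C2;
  vcomp : C2 -> C2 -> C2;           (* vcomp a b = a * b  (b first, then a) *)
  hcomp : C2 -> C2 -> C2;           (* hcomp a' a = a' a  (a first, then a') *)
  dom_id1 : forall x, dom (id1 x) = x;
  cod_id1 : forall x, cod (id1 x) = x;
  dom_comp1 : forall f g, cod f = dom g -> dom (comp1 g f) = dom f;
  cod_comp1 : forall f g, cod f = dom g -> cod (comp1 g f) = cod g;
  comp1_assoc : forall f g h, cod f = dom g -> cod g = dom h ->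
      comp1 h (comp1 g f) = comp1 (comp1 h g) f;
  comp1_id_l : forall f, comp1 (id1 (cod f)) f = f;
  comp1_id_r : forall f, comp1 f (id1 (dom f)) = f;
  cell_dom : forall a, dom (src a) = dom (tgt a);
  cell_cod : forall a, cod (src a) = cod (tgt a);
  src_id2 : forall f, src (id2 f) = f;
  tgt_id2 : forall f, tgt (id2 f) = f;
  src_vcomp : forall a b, src a = tgt b -> src (vcomp a b) = src b;
  tgt_vcomp : forall a b, src a = tgt b -> tgt (vcomp a b) = tgt a;
  vcomp_assoc : forall a b c, src a = tgt b -> src b = tgt c ->
      vcomp a (vcomp b c) = vcomp (vcomp a b) c;
  vcomp_id_l : forall a, vcomp (id2 (tgt a)) a = a;
  vcomp_id_r : forall a, vcomp a (id2 (src a)) = a;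
  src_hcomp : forall a' a, cod (src a) = dom (src a') ->
      src (hcomp a' a) = comp1 (src a') (src a);
  tgt_hcomp : forall a' a, cod (src a) = dom (src a') ->
      tgt (hcomp a' a) = comp1 (tgt a') (tgt a);
  hcomp_assoc : forall a b c, cod (src a) = dom (src b) -> cod (src b) = dom (src c) ->
      hcomp c (hcomp b a) = hcomp (hcomp c b) a;
  hcomp_id_l : forall a, hcomp (id2 (id1 (cod (src a)))) a = a;
  hcomp_id_r : forall a, hcomp a (id2 (id1 (dom (src a)))) = a;
  hcomp_id2 : forall f g, cod f = dom g -> hcomp (id2 g) (id2 f) = id2 (comp1 g f);
  interchange : forall a b a' b', src a = tgt b -> src a' = tgt b' ->
      cod (src b) = dom (src b') ->
      hcomp (vcomp a' b') (vcomp a b) = vcomp (hcomp a' a) (hcomp b' b)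
}.

Set Implicit Arguments.
Unset Strict Implicit.

Section Defs.
Variable K : TwoCat.

(* whiskering:  wl f a = "f a",  wr a f = "a f" *)
Definition wl (f : H1 K) (a : C2 K) : C2 K := hcomp K (id2 K f) a.
Definition wr (a : C2 K) (f : H1 K) : C2 K := hcomp K a (id2 K f).
Definition c1 (g f : H1 K) : H1 K := comp1 K g f.
Definition vc (a b : C2 K) : C2 K := vcomp K a b.

Definition Cell2 (a : C2 K) (f g : H1 K) : Prop := src K a = f /\ tgt K a = g.

Definition is_monad (k : Ob K) (t : H1 K) (mu eta : C2 K) : Prop :=
  (dom K t = k /\ cod K t = k /\
      Cell2 mu (c1 t t) t /\ Cell2 eta (id1 K k) t
  /\       vc mu (wr mu t) = vc mu (wl t mu)
      /\ vc mu (wr eta t) = id2 K t /\ vc mu (wl t eta) = id2 K t).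

Definition is_premonad (k : Ob K) (m : H1 K) (M e : C2 K) : Prop :=
  (dom K m = k /\ cod K m = k /\
      Cell2 M (c1 m m) m /\ Cell2 e (id1 K k) m
  /\       vc M (wr M m) = vc M (wl m M)
      /\ vc M (wr e m) = vc M (wl m e)
      /\ vc M (hcomp K e e) = e
      /\ vc (vc M (wr M m)) (wr e (c1 m m)) = M).

Definition em_1cell (k k' : Ob K) (t : H1 K) (mu : C2 K) (t' : H1 K) (mu' : C2 K) (V : H1 K) (psi : C2 K) : Prop :=
  (dom K V = k /\ cod K V = k' /\ Cell2 psi (c1 t' V) (c1 V t)
  /\       vc (vc (wl V mu) (wr psi t)) (wl t' psi) = vc psi (wr mu' V)).

Definition em_2cell (t : H1 K) (mu : C2 K) (t' : H1 K) (eta' : C2 K) (V : H1 K) (psi : C2 K) (W : H1 K) (phi : C2 K)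
    (rho : C2 K) : Prop :=
  (Cell2 rho V (c1 W t) /\
      vc (vc (wl W mu) (wr rho t)) psi = vc (vc (wl W mu) (wr phi t)) (wl t' rho)
  /\       rho = vc (vc (vc (wl W mu) (wr phi t)) (wr eta' (c1 W t))) rho).

Definition em_id2 (eta' : C2 K) (W : H1 K) (phi : C2 K) : C2 K := vc phi (wr eta' W).

Definition em_vcomp (t : H1 K) (mu : C2 K) (U : H1 K) (tau rho : C2 K) : C2 K :=
  vc (vc (wl U mu) (wr tau t)) rho.

Definition em_hcomp (t : H1 K) (mu : C2 K) (V : H1 K) (psi : C2 K) (W W' : H1 K) (rho' rho : C2 K) : C2 K :=
  vc (vc (vc (wl (c1 W' W) mu) (wl W' (wr rho t))) (wl W' psi)) (wr rho' V).

Definition EMw_monad (k : Ob K) (t : H1 K) (mu eta : C2 K) (s : H1 K) (x : C2 K * C2 K * C2 K) : Prop :=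
  let '(psi, nu, th) := x in
  let ss := c1 s s in
  let psi_ss := vc (wl s psi) (wr psi s) in     (* (s,psi) o (s,psi) = (ss, s psi * psi s) *)
  let idm := em_id2 eta s psi in
  em_1cell k k t mu t mu s psi
  /\ em_2cell t mu t eta ss psi_ss s psi nu
  /\ em_2cell t mu t eta (id1 K k) (id2 K t) s psi th
  /\ em_vcomp t mu s nu (em_hcomp t mu s psi s s nu idm)
     = em_vcomp t mu s nu (em_hcomp t mu ss psi_ss s s idm nu)
  /\ em_vcomp t mu s nu (em_hcomp t mu s psi s s th idm) = idm
  /\ em_vcomp t mu s nu (em_hcomp t mu (id1 K k) (id2 K t) s s idm th) = idm.

Definition st_premonad (k : Ob K) (t : H1 K) (mu : C2 K) (s : H1 K) (y : C2 K * C2 K) : Prop :=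
  let '(Th, th) := y in
  is_premonad k (c1 s t) Th th
  /\ vc Th (wl (c1 (c1 s t) s) mu) = vc (wl s mu) (wr Th t).

End Defs.

(* Main.v *)
Require Import Defs.
From Stdlib Require Import List Bool Arith Lia ProofIrrelevance.
Import ListNotations.
Set Implicit Arguments.

Inductive A := AS | AT.
Inductive gen := Mu | Eta | Psi | Nu | Th | Tht.
Definition gdom (g : gen) : list A :=
  match g with Mu => [AT;AT] | Eta => [] | Psi => [AT;AS] | Nu => [AS;AS] | Th => [] | Tht => [AS;AT;AS;AT] end.
Definition gcod (g : gen) : list A :=
  match g with Mu => [AT] | Eta => [AT] | Psi => [AS;AT] | Nu => [AS;AT] | Th => [AS;AT] | Tht => [AS;AT] end.

Definition layer := (list A * gen * list A)%type.


Definition Aeqb (a b : A) := match a, b with AS, AS | AT, AT => true | _, _ => false end.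
Fixpoint weqb (l1 l2 : list A) : bool :=
  match l1, l2 with [], [] => true | a :: l1', b :: l2' => Aeqb a b && weqb l1' l2' | _, _ => false end.
Lemma weqb_eq l1 l2 : weqb l1 l2 = true -> l1 = l2.
Proof.
  revert l2; induction l1 as [|a l1 IH]; destruct l2 as [|b l2]; simpl; try discriminate; auto.
  intro H; apply andb_prop in H; destruct H as [H1 H2]. f_equal; [destruct a, b; simpl in H1; congruence | auto].
Qed.

Lemma weqb_refl l : l = l /\ weqb l l = true.
Proof. split; auto. induction l as [|a l IH]; simpl; auto. rewrite IH; destruct a; auto. Qed.

Definition gnum (g : gen) := match g with Mu => 0 | Eta => 1 | Psi => 2 | Nu => 3 | Th => 4 | Tht => 5 end.
Definition geqb g1 g2 := Nat.eqb (gnum g1) (gnum g2).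
Lemma geqb_eq g1 g2 : geqb g1 g2 = true -> g1 = g2.
Proof. unfold geqb; destruct g1, g2; simpl; congruence. Qed.
Definition leqb (x y : layer) := let '(L1, g1, R1) := x in let '(L2, g2, R2) := y in
  weqb L1 L2 && geqb g1 g2 && weqb R1 R2.
Lemma leqb_eq x y : leqb x y = true -> x = y.
Proof.
  destruct x as [[L1 g1] R1], y as [[L2 g2] R2]; simpl. intro H.
  apply andb_prop in H; destruct H as [H H3]; apply andb_prop in H; destruct H as [H1 H2].
  apply weqb_eq in H1; apply weqb_eq in H3; apply geqb_eq in H2; subst; auto.
Qed.
Fixpoint lseqb (D1 D2 : list layer) : bool :=
  match D1, D2 with [], [] => true | x :: D1', y :: D2' => leqb x y && lseqb D1' D2' | _, _ => false end.
Lemma lseqb_eq D1 D2 : lseqb D1 D2 = true -> D1 = D2.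
Proof.
  revert D2; induction D1 as [|x D1 IH]; destruct D2 as [|y D2]; simpl; try discriminate; auto.
  intro H; apply andb_prop in H; destruct H as [H1 H2]. apply leqb_eq in H1; f_equal; auto.
Qed.

Fixpoint strip (p l : list A) : option (list A) :=
  match p, l with [], _ => Some l | a :: p', b :: l' => if Aeqb a b then strip p' l' else None | _, _ => None end.
Lemma strip_ok p l m : strip p l = Some m -> l = p ++ m.
Proof.
  revert l; induction p as [|a p IH]; destruct l as [|b l]; simpl; try congruence.
  destruct (Aeqb a b) eqn:E; try discriminate. intro H; apply IH in H; subst.
  destruct a, b; simpl in E; congruence.
Qed.

Definition ldom (x : layer) := let '(L, g, R) := x in L ++ gdom g ++ R.
Definition lcod (x : layer) := let '(L, g, R) := x in L ++ gcod g ++ R.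

Fixpoint wf (u : list A) (D : list layer) : option (list A) :=
  match D with [] => Some u | x :: D' => if weqb u (ldom x) then wf (lcod x) D' else None end.

Definition swap2 (x y : layer) : option (layer * layer) :=
  let '(L1, g1, R1) := x in let '(L2, g2, R2) := y in
  match strip (L1 ++ gcod g1) L2 with
  | Some m => if weqb R1 (m ++ gdom g2 ++ R2) then Some ((L1 ++ gdom g1 ++ m, g2, R2), (L1, g1, m ++ gcod g2 ++ R2)) else None
  | None =>
    match strip (L2 ++ gdom g2) L1 with
    | Some m => if weqb R2 (m ++ gcod g1 ++ R1) then Some ((L2, g2, m ++ gdom g1 ++ R1), (L2 ++ gcod g2 ++ m, g1, R1)) else None
    | None => None
    end
  end.

Fixpoint swap_at (n : nat) (D : list layer) : option (list layer) :=
  match n, D with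
  | 0, x :: y :: D' => match swap2 x y with Some (y', x') => Some (y' :: x' :: D') | None => None end
  | S n', x :: D' => match swap_at n' D' with Some D'' => Some (x :: D'') | None => None end
  | _, _ => None
  end.
Fixpoint swaps (ns : list nat) (D : list layer) : option (list layer) :=
  match ns with [] => Some D | n :: ns' => match swap_at n D with Some D' => swaps ns' D' | None => None end end.

Definition whisk (L R : list A) (x : layer) : layer := let '(L0, g, R0) := x in (L ++ L0, g, R0 ++ R).

Definition repl (u : list A) (n : nat) (L R u0 : list A) (E1 E2 D : list layer) : option (list layer) :=
  let P := firstn n D in
  let M := firstn (length E1) (skipn n D) in
  let Q := skipn (length E1) (skipn n D) in
  match wf u P with
  | Some u1 => if weqb u1 (L ++ u0 ++ R) && lseqb M (map (whisk L R) E1) then Some (P ++ map (whisk L R) E2 ++ Q) else None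
  | None => None
  end.


Fixpoint downplan (j p : nat) : list nat :=
  match p with 0 => [] | S p' => if Nat.leb p j then [] else p' :: downplan j p' end.

Definition dummy : layer := ([], Mu, []).

Fixpoint find_bring_aux (D : list layer) (j p : nat) (target : layer) (fuel : nat) : option (list nat * list layer) :=
  match fuel with 0 => None | S fuel' =>
    let pl := downplan j p in
    match swaps pl D with
    | Some D' => if leqb (nth j D' dummy) target then Some (pl, D') else find_bring_aux D j (S p) target fuel'
    | None => find_bring_aux D j (S p) target fuel'
    end
  end.
Definition find_bring D j target := find_bring_aux D j j target (length D - j).

Fixpoint gather (D : list layer) (j : nat) (L R : list A) (es : list layer) : option (list nat * list layer) :=
  match es with
  | [] => Some ([], D)
  | e :: es' =>
    match find_bring D j (whisk L R e) with
    | Some (pl, D') => match gather D' (S j) L R es' with Some (pl2, D'') => Some (pl ++ pl2, D'') | None => None end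
    | None => None
    end
  end.

Definition match_first (x e : layer) : option (list A * list A) :=
  let '(L0, g, R0) := x in let '(Le, ge, Re) := e in
  if geqb g ge then
    match strip (rev Le) (rev L0), strip Re R0 with
    | Some m, Some R => Some (rev m, R)
    | _, _ => None
    end
  else None.

Fixpoint find_plan_aux (E1 : list layer) (D : list layer) (i : nat) (skip : nat) (fuel : nat) : option (list nat * nat * list A * list A) :=
  match fuel with 0 => None | S fuel' =>
    match E1 with [] => None | e1 :: es =>
      match match_first (nth i D dummy) e1 with
      | Some (L, R) =>
        match gather D (S i) L R es with
        | Some (pl, _) => match skip with 0 => Some (pl, i, L, R) | S sk => find_plan_aux E1 D (S i) sk fuel' end
        | None => find_plan_aux E1 D (S i) skip fuel'
        end
      | None => find_plan_aux E1 D (S i) skip fuel'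
      end
    end
  end.
Definition find_plan E1 D skip := find_plan_aux E1 D 0 skip (length D).

Fixpoint align_aux (D Dt : list layer) (j : nat) (fuel : nat) : option (list nat) :=
  match fuel with 0 => Some [] | S fuel' =>
    match nth_error Dt j with
    | None => Some []
    | Some x => match find_bring D j x with
               | Some (pl, D') => match align_aux D' Dt (S j) fuel' with Some pl2 => Some (pl ++ pl2) | None => None end
               | None => None end
    end
  end.
Definition align D Dt := align_aux D Dt 0 (length Dt).

Definition is_left (x y : layer) : bool :=
  let '(L1, g1, R1) := x in let '(L2, g2, R2) := y in
  match strip (L1 ++ gcod g1) L2 with
  | Some m => false
  | None => match strip (L2 ++ gdom g2) L1 with Some m => weqb R2 (m ++ gcod g1 ++ R1) | None => false end
  end.

Fixpoint lpass_c (x : layer) (D : list layer) (j : nat) : list nat * list layer :=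
  match D with
  | [] => ([], [x])
  | y :: D' =>
    let fallback := let '(pl, D3) := lpass_c y D' (S j) in (pl, x :: D3) in
    if is_left x y then
      match swap2 x y with
      | Some (y', x') => let '(pl, D3) := lpass_c x' D' (S j) in (j :: pl, y' :: D3)
      | None => fallback
      end
    else fallback
  end.
Definition lpass (D : list layer) (j : nat) : list nat * list layer :=
  match D with [] => ([], []) | x :: D' => lpass_c x D' j end.

Fixpoint lnf_aux (D : list layer) (fuel : nat) : list nat * list layer :=
  match fuel with 0 => ([], D) | S f =>
    let '(pl, D') := lpass D 0 in
    match pl with [] => ([], D) | _ => let '(pl2, D'') := lnf_aux D' f in (pl ++ pl2, D'') end
  end.
Definition lnf D := lnf_aux D (S (length D * length D)).

Definition find_plan2 E1 D skip :=
  match find_plan E1 D skip with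
  | Some p => Some p
  | None => let '(pl, D') := lnf D in
    match find_plan E1 D' skip with
    | Some (pl2, n, L, R) => Some (pl ++ pl2, n, L, R)
    | None => None
    end
  end.

Section Eng.
Variable K : TwoCat.
Variable k : Ob K.
Variables s t : H1 K.
Hypothesis Hsd : dom K s = k.
Hypothesis Hsc : cod K s = k.
Hypothesis Htd : dom K t = k.
Hypothesis Htc : cod K t = k.

Definition atom (a : A) := match a with AS => s | AT => t end.
Fixpoint wd (l : list A) : H1 K :=
  match l with [] => id1 K k | a :: l' => c1 (atom a) (wd l') end.

Lemma atom_dom a : dom K (atom a) = k. Proof. destruct a; assumption. Qed.
Lemma atom_cod a : cod K (atom a) = k. Proof. destruct a; assumption. Qed.

Lemma wd_dc l : dom K (wd l) = k /\ cod K (wd l) = k.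
Proof.
  induction l as [|a l IH]; simpl.
  - split; [apply dom_id1|apply cod_id1].
  - destruct IH as [IH1 IH2]. unfold c1. split.
    + rewrite dom_comp1; auto. rewrite atom_dom; auto.
    + rewrite cod_comp1. apply atom_cod. rewrite atom_dom; auto.
Qed.
Lemma wd_dom l : dom K (wd l) = k. Proof. apply wd_dc. Qed.
Lemma wd_cod l : cod K (wd l) = k. Proof. apply wd_dc. Qed.

Lemma wd_app l1 l2 : c1 (wd l1) (wd l2) = wd (l1 ++ l2).
Proof.
  induction l1 as [|a l IH]; simpl; unfold c1.
  - rewrite <- (wd_cod l2). apply comp1_id_l.
  - rewrite <- comp1_assoc. fold (c1 (wd l) (wd l2)). rewrite IH. reflexivity.
    rewrite wd_cod, wd_dom; auto. rewrite wd_cod, atom_dom; auto.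
Qed.

Definition rep (f : H1 K) (L : list A) := f = wd L.
Lemma rep_s : rep s [AS].
Proof. unfold rep; simpl; unfold c1. rewrite <- Hsd. symmetry; apply comp1_id_r. Qed.
Lemma rep_t : rep t [AT].
Proof. unfold rep; simpl; unfold c1. rewrite <- Htd. symmetry; apply comp1_id_r. Qed.
Lemma rep_id : rep (id1 K k) [].
Proof. reflexivity. Qed.
Lemma rep_c1 f g L1 L2 : rep f L1 -> rep g L2 -> rep (c1 f g) (L1 ++ L2).
Proof. unfold rep; intros -> ->. apply wd_app. Qed.

Ltac sc := repeat match goal with H : src _ ?a = _ |- context[src _ ?a] => rewrite H | H : tgt _ ?a = _ |- context [tgt _ ?a] => rewrite H end; repeat rewrite ?src_id2, ?tgt_id2, ?wd_cod, ?wd_dom; try reflexivity; try congruence.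

Definition ty (a : C2 K) (u v : list A) := src K a = wd u /\ tgt K a = wd v.

Lemma ty_vc a b u v w : ty b u v -> ty a v w -> ty (vc a b) u w.
Proof.
  intros [H1 H2] [H3 H4]; split; unfold vc.
  rewrite src_vcomp; auto. congruence.
  rewrite tgt_vcomp; auto. congruence.
Qed.
Lemma ty_wl a L u v : ty a u v -> ty (wl (wd L) a) (L ++ u) (L ++ v).
Proof.
  intros [H1 H2]; unfold wl; split.
  - rewrite src_hcomp, src_id2, H1; [apply wd_app|]. rewrite src_id2, H1, wd_cod, wd_dom; auto.
  - rewrite tgt_hcomp, tgt_id2, H2; [apply wd_app|]. rewrite src_id2, H1, wd_cod, wd_dom; auto.
Qed.
Lemma ty_wr a R u v : ty a u v -> ty (wr a (wd R)) (u ++ R) (v ++ R).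
Proof.
  intros [H1 H2]; unfold wr; split.
  - rewrite src_hcomp, src_id2, H1; [apply wd_app|]. rewrite src_id2, H1, wd_cod, wd_dom; auto.
  - rewrite tgt_hcomp, tgt_id2, H2; [apply wd_app|]. rewrite src_id2, H1, wd_cod, wd_dom; auto.
Qed.
Lemma ty_id u : ty (id2 K (wd u)) u u.
Proof. split; [apply src_id2|apply tgt_id2]. Qed.

Lemma vc_id_l a u v : ty a u v -> vc (id2 K (wd v)) a = a.
Proof. intros [_ H]; rewrite <- H; apply vcomp_id_l. Qed.
Lemma vc_id_r a u v : ty a u v -> vc a (id2 K (wd u)) = a.
Proof. intros [H _]; rewrite <- H; apply vcomp_id_r. Qed.
Lemma vc_assoc a b c u v w x : ty c u v -> ty b v w -> ty a w x -> vc a (vc b c) = vc (vc a b) c.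
Proof. intros [? ?] [? ?] [? ?]; unfold vc; apply vcomp_assoc; congruence. Qed.

Lemma vv_id f : vcomp K (id2 K f) (id2 K f) = id2 K f.
Proof. generalize (vcomp_id_l K (id2 K f)); rewrite tgt_id2; auto. Qed.

Lemma wl_vc a b L u v w : ty b u v -> ty a v w -> wl (wd L) (vc a b) = vc (wl (wd L) a) (wl (wd L) b).
Proof.
  intros [H1 H2] [H3 H4]; unfold wl, vc.
  rewrite <- interchange; try congruence.
  rewrite vv_id; reflexivity.
  rewrite src_id2, tgt_id2; auto.
  rewrite src_id2, H1, wd_cod, wd_dom; auto.
Qed.
Lemma wr_vc a b R u v w : ty b u v -> ty a v w -> wr (vc a b) (wd R) = vc (wr a (wd R)) (wr b (wd R)).
Proof.
  intros [H1 H2] [H3 H4]; unfold wr, vc.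
  rewrite <- interchange; try congruence.
  rewrite vv_id; reflexivity.
  rewrite src_id2, tgt_id2; auto.
  rewrite src_id2, H1, wd_cod, wd_dom; congruence.
Qed.
Lemma wl_id L u : wl (wd L) (id2 K (wd u)) = id2 K (wd (L ++ u)).
Proof. unfold wl. rewrite hcomp_id2, <- wd_app; auto. rewrite wd_cod, wd_dom; auto. Qed.
Lemma wr_id R u : wr (id2 K (wd u)) (wd R) = id2 K (wd (u ++ R)).
Proof. unfold wr. rewrite hcomp_id2, <- wd_app; auto. rewrite wd_cod, wd_dom; auto. Qed.
Lemma wl_wl a L1 L2 u v : ty a u v -> wl (wd L1) (wl (wd L2) a) = wl (wd (L1 ++ L2)) a.
Proof.
  intros [H1 H2]; unfold wl. rewrite hcomp_assoc by sc. rewrite hcomp_id2 by sc. rewrite wd_app; auto.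
Qed.
Lemma wr_wr a R1 R2 u v : ty a u v -> wr (wr a (wd R1)) (wd R2) = wr a (wd (R1 ++ R2)).
Proof.
  intros [H1 H2]; unfold wr. rewrite <- hcomp_assoc by sc. rewrite hcomp_id2 by sc. rewrite wd_app; auto.
Qed.
Lemma wl_wr a L R u v : ty a u v -> wl (wd L) (wr a (wd R)) = wr (wl (wd L) a) (wd R).
Proof.
  intros [H1 H2]; unfold wl, wr. rewrite hcomp_assoc by sc. auto.
Qed.
Lemma wl_nil a u v : ty a u v -> wl (wd []) a = a.
Proof. intros [H1 H2]; unfold wl; simpl. rewrite <- (wd_cod u), <- H1. apply hcomp_id_l. Qed.
Lemma wr_nil a u v : ty a u v -> wr a (wd []) = a.
Proof. intros [H1 H2]; unfold wr; simpl. rewrite <- (wd_dom u), <- H1. apply hcomp_id_r. Qed.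

Lemma hc_split a c u1 v1 u2 v2 : ty a u1 v1 -> ty c u2 v2 ->
  hcomp K a c = vc (wl (wd v1) c) (wr a (wd u2)) /\
  hcomp K a c = vc (wr a (wd v2)) (wl (wd u1) c).
Proof.
  intros [H1 H2] [H3 H4]; unfold wl, wr, vc; split.
  - rewrite <- interchange by sc. rewrite <- H2, <- H3, vcomp_id_l, vcomp_id_r; reflexivity.
  - rewrite <- interchange by sc. rewrite <- H1, <- H4, vcomp_id_l, vcomp_id_r; reflexivity.
Qed.

Lemma xch a c u1 v1 u2 v2 : ty a u1 v1 -> ty c u2 v2 ->
  vc (wl (wd v1) c) (wr a (wd u2)) = vc (wr a (wd v2)) (wl (wd u1) c).
Proof. intros Ha Hc. destruct (hc_split Ha Hc) as [E1 E2]. congruence. Qed.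


Lemma rep_wd L : rep (wd L) L.
Proof. reflexivity. Qed.

Ltac rep_t := lazymatch goal with |- rep ?f ?L =>
  lazymatch f with
  | c1 _ _ => eapply rep_c1; rep_t
  | id1 _ _ => apply rep_id
  | wd _ => apply rep_wd
  | _ => first [ apply rep_s | apply rep_t ]
  end end.


Lemma rep_dom f L : rep f L -> dom K f = k.
Proof. intros ->; apply wd_dom. Qed.
Lemma rep_cod f L : rep f L -> cod K f = k.
Proof. intros ->; apply wd_cod. Qed.
Lemma ty_cell a u v f g : ty a u v -> rep f u -> rep g v -> Cell2 a f g.
Proof. intros [H1 H2] -> ->; split; auto. Qed.

Section Val.
Variable val : gen -> C2 K.
Hypothesis Hval : forall g, ty (val g) (gdom g) (gcod g).

Definition lay (x : layer) : C2 K := let '(L, g, R) := x in wl (wd L) (wr (val g) (wd R)).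
Lemma ty_lay x : ty (lay x) (ldom x) (lcod x).
Proof. destruct x as [[L g] R]; simpl. apply ty_wl, ty_wr, Hval. Qed.

Hint Resolve ty_vc ty_wl ty_wr ty_id ty_lay Hval : tyd.

Fixpoint interp (D : list layer) (acc : C2 K) : C2 K :=
  match D with [] => acc | x :: D' => interp D' (vc (lay x) acc) end.

Lemma wf_cons u x D : wf u (x :: D) = if weqb u (ldom x) then wf (lcod x) D else None.
Proof. reflexivity. Qed.

Lemma wf_app u D1 D2 : wf u (D1 ++ D2) = match wf u D1 with Some u1 => wf u1 D2 | None => None end.
Proof.
  revert u; induction D1 as [|x D1 IH]; intro u; simpl; auto.
  destruct (weqb u (ldom x)); auto.
Qed.

Lemma interp_app D1 D2 acc : interp (D1 ++ D2) acc = interp D2 (interp D1 acc).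
Proof. revert acc; induction D1; simpl; auto. Qed.

Lemma wf_consE u x D v : wf u (x :: D) = Some v -> u = ldom x /\ wf (lcod x) D = Some v.
Proof.
  simpl. destruct (weqb u (ldom x)) eqn:E; try discriminate. apply weqb_eq in E. auto.
Qed.

Lemma interp_ty D : forall u v acc w, wf u D = Some v -> ty acc w u -> ty (interp D acc) w v.
Proof.
  induction D as [|x D IH]; intros u v acc w Hw Ha; simpl.
  - simpl in Hw; congruence.
  - apply wf_consE in Hw; destruct Hw as [-> Hw]. eapply IH; eauto with tyd.
Qed.

Lemma interp_vc D : forall u v acc w, wf u D = Some v -> ty acc w u ->
  interp D acc = vc (interp D (id2 K (wd u))) acc.
Proof.
  induction D as [|x D IH]; intros u v acc w Hw Ha; simpl.
  - symmetry; eapply vc_id_l; eauto.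
  - apply wf_consE in Hw; destruct Hw as [-> Hw].
    rewrite (IH _ _ _ _ Hw (ty_vc Ha (ty_lay x))).
    rewrite (vc_id_r (ty_lay x)).
    rewrite (IH _ _ _ _ Hw (ty_lay x)).
    eapply vc_assoc; eauto with tyd. eapply interp_ty; eauto with tyd.
Qed.

Lemma app_nil_r' (l : list A) : l ++ [] = l. Proof. apply app_nil_r. Qed.

Lemma swap2_sound x y y' x' : swap2 x y = Some (y', x') ->
  ldom y = lcod x /\ ldom y' = ldom x /\ lcod y' = ldom x' /\ lcod x' = lcod y /\ vc (lay y) (lay x) = vc (lay x') (lay y').
Proof.
  destruct x as [[L1 g1] R1], y as [[L2 g2] R2]; unfold swap2.
  destruct (strip (L1 ++ gcod g1) L2) as [m|] eqn:E1.
  - destruct (weqb R1 (m ++ gdom g2 ++ R2)) eqn:E2; try discriminate.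
    intro H; inversion H; subst; clear H.
    apply strip_ok in E1; apply weqb_eq in E2; subst.
    simpl; rewrite <- !app_assoc; split; [reflexivity|]; split; [reflexivity|]; split; [reflexivity|]; split; [reflexivity|].
    set (c := wl (wd m) (wr (val g2) (wd R2))).
    assert (Hc : ty c (m ++ gdom g2 ++ R2) (m ++ gcod g2 ++ R2)) by (unfold c; eauto with tyd).
    assert (Ey : wl (wd (L1 ++ gcod g1 ++ m)) (wr (val g2) (wd R2)) = wl (wd L1) (wl (wd (gcod g1)) c)).
    { unfold c. rewrite !(@wl_wl (wr (val g2) (wd R2)) _ _ (gdom g2 ++ R2) (gcod g2 ++ R2)) by eauto with tyd.
      reflexivity. }
    assert (Ey' : wl (wd (L1 ++ gdom g1 ++ m)) (wr (val g2) (wd R2)) = wl (wd L1) (wl (wd (gdom g1)) c)).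
    { unfold c. rewrite !(@wl_wl (wr (val g2) (wd R2)) _ _ (gdom g2 ++ R2) (gcod g2 ++ R2)) by eauto with tyd.
      reflexivity. }
    rewrite Ey, Ey'.
    rewrite <- (wl_vc _ (ty_wr (m ++ gdom g2 ++ R2) (Hval g1)) (ty_wl (gcod g1) Hc)).
    rewrite (xch (Hval g1) Hc).
    rewrite (wl_vc _ (ty_wl (gdom g1) Hc) (ty_wr (m ++ gcod g2 ++ R2) (Hval g1))).
    reflexivity.
  - destruct (strip (L2 ++ gdom g2) L1) as [m|] eqn:E3; try discriminate.
    destruct (weqb R2 (m ++ gcod g1 ++ R1)) eqn:E2; try discriminate.
    intro H; inversion H; subst; clear H.
    apply strip_ok in E3; apply weqb_eq in E2; subst.
    simpl; rewrite <- !app_assoc; split; [reflexivity|]; split; [reflexivity|]; split; [reflexivity|]; split; [reflexivity|].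
    set (c := wl (wd m) (wr (val g1) (wd R1))).
    assert (Hc : ty c (m ++ gdom g1 ++ R1) (m ++ gcod g1 ++ R1)) by (unfold c; eauto with tyd).
    assert (Ex : wl (wd (L2 ++ gdom g2 ++ m)) (wr (val g1) (wd R1)) = wl (wd L2) (wl (wd (gdom g2)) c)).
    { unfold c. rewrite !(@wl_wl (wr (val g1) (wd R1)) _ _ (gdom g1 ++ R1) (gcod g1 ++ R1)) by eauto with tyd.
      reflexivity. }
    assert (Ex' : wl (wd (L2 ++ gcod g2 ++ m)) (wr (val g1) (wd R1)) = wl (wd L2) (wl (wd (gcod g2)) c)).
    { unfold c. rewrite !(@wl_wl (wr (val g1) (wd R1)) _ _ (gdom g1 ++ R1) (gcod g1 ++ R1)) by eauto with tyd.
      reflexivity. }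
    rewrite Ex, Ex'.
    rewrite <- (wl_vc _ (ty_wl (gdom g2) Hc) (ty_wr (m ++ gcod g1 ++ R1) (Hval g2))).
    rewrite <- (xch (Hval g2) Hc).
    rewrite (wl_vc _ (ty_wr (m ++ gdom g1 ++ R1) (Hval g2)) (ty_wl (gcod g2) Hc)).
    reflexivity.
Qed.



Lemma ty_lay_cast x y : ldom y = lcod x -> ty (lay y) (lcod x) (lcod y).
Proof. intro E; rewrite <- E; apply ty_lay. Qed.
Lemma ty_lay_cast2 x y : ldom y = ldom x -> ty (lay y) (ldom x) (lcod y).
Proof. intro E; rewrite <- E; apply ty_lay. Qed.
Lemma ty_lay_cast3 x y : lcod y = ldom x -> ty (lay x) (lcod y) (lcod x).
Proof. intro E; rewrite E; apply ty_lay. Qed.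

Lemma swap_at_sound n : forall D u v D', wf u D = Some v -> swap_at n D = Some D' ->
  wf u D' = Some v /\ (forall acc w, ty acc w u -> interp D acc = interp D' acc).
Proof.
  induction n as [|n IH]; intros D u v D' Hw Hs.
  - destruct D as [|x [|y D]]; simpl in Hs; try discriminate.
    destruct (swap2 x y) as [[y' x']|] eqn:E; try discriminate.
    inversion Hs; subst; clear Hs.
    destruct (swap2_sound _ _ E) as (E1 & E2 & E3 & E4 & E5).
    apply wf_consE in Hw; destruct Hw as [-> Hw]. apply wf_consE in Hw; destruct Hw as [_ Hw].
    split.
    + simpl. rewrite E2. rewrite (proj2 (@weqb_refl (ldom x))). rewrite E3, (proj2 (@weqb_refl (ldom x'))). rewrite E4. exact Hw.
    + intros acc w Ha. simpl.
      rewrite (vc_assoc Ha (ty_lay x) (ty_lay_cast x y E1)).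
      rewrite E5.
      rewrite <- (vc_assoc Ha (ty_lay_cast2 x y' E2) (ty_lay_cast3 x' y' E3)). reflexivity.
  - destruct D as [|x D]; simpl in Hs; try discriminate.
    destruct (swap_at n D) as [D''|] eqn:E; try discriminate.
    inversion Hs; subst; clear Hs.
    apply wf_consE in Hw; destruct Hw as [-> Hw].
    destruct (IH _ _ _ _ Hw E) as [H1 H2]. split.
    + simpl. rewrite (proj2 (@weqb_refl (ldom x))). exact H1.
    + intros acc w Ha. simpl. apply (H2 _ w). eauto with tyd.
Qed.

Lemma swaps_sound ns : forall D u v D', wf u D = Some v -> swaps ns D = Some D' ->
  wf u D' = Some v /\ (forall acc w, ty acc w u -> interp D acc = interp D' acc).
Proof.
  induction ns as [|n ns IH]; intros D u v D' Hw Hs; simpl in Hs.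
  - inversion Hs; subst; auto.
  - destruct (swap_at n D) as [D1|] eqn:E; try discriminate.
    destruct (@swap_at_sound n D u v D1 Hw E) as [H1 H2].
    destruct (IH D1 u v D' H1 Hs) as [H3 H4]. split; auto.
    intros acc w Ha. rewrite (H2 _ _ Ha). eapply H4; eauto.
Qed.

Lemma lay_whisk L R x : lay (whisk L R x) = wl (wd L) (wr (lay x) (wd R)).
Proof.
  destruct x as [[L0 g] R0]; simpl.
  rewrite <- (wl_wr L0 R (ty_wr R0 (Hval g))).
  rewrite (wr_wr R0 R (Hval g)).
  rewrite (wl_wl L L0 (ty_wr (R0 ++ R) (Hval g))). reflexivity.
Qed.

Lemma ldom_whisk L R x : ldom (whisk L R x) = L ++ ldom x ++ R.
Proof. destruct x as [[L0 g] R0]; simpl; rewrite <- !app_assoc; reflexivity. Qed.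
Lemma lcod_whisk L R x : lcod (whisk L R x) = L ++ lcod x ++ R.
Proof. destruct x as [[L0 g] R0]; simpl; rewrite <- !app_assoc; reflexivity. Qed.

Lemma wf_whisk L R E : forall u v, wf u E = Some v -> wf (L ++ u ++ R) (map (whisk L R) E) = Some (L ++ v ++ R).
Proof.
  induction E as [|x E IH]; intros u v Hw; simpl in *.
  - congruence.
  - destruct (weqb u (ldom x)) eqn:E1; try discriminate. apply weqb_eq in E1; subst.
    rewrite ldom_whisk, (proj2 (@weqb_refl _)), lcod_whisk. auto.
Qed.

Lemma interp_whisk L R E : forall u v b w, wf u E = Some v -> ty b w u ->
  interp (map (whisk L R) E) (wl (wd L) (wr b (wd R))) = wl (wd L) (wr (interp E b) (wd R)).
Proof.
  induction E as [|x E IH]; intros u v b w Hw Hb; simpl; auto.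
  apply wf_consE in Hw; destruct Hw as [-> Hw].
  rewrite lay_whisk.
  rewrite <- (wl_vc L (ty_wr R Hb) (ty_wr R (ty_lay x))).
  rewrite <- (wr_vc R Hb (ty_lay x)).
  eapply IH; eauto with tyd.
Qed.

Definition deq u v D1 D2 := wf u D1 = Some v /\ wf u D2 = Some v /\ interp D1 (id2 K (wd u)) = interp D2 (id2 K (wd u)).

Lemma interp_whisk_vc L R E u v acc w : wf u E = Some v -> ty acc w (L ++ u ++ R) ->
  interp (map (whisk L R) E) acc = vc (wl (wd L) (wr (interp E (id2 K (wd u))) (wd R))) acc.
Proof.
  intros Hw Ha.
  erewrite interp_vc; [ | apply wf_whisk; exact Hw | exact Ha].
  f_equal.
  rewrite <- (wl_id L (u ++ R)), <- (wr_id R u).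
  eapply interp_whisk; eauto with tyd.
Qed.

Lemma repl_sound u0 v0 E1 E2 u v n L R D D' : deq u0 v0 E1 E2 -> wf u D = Some v ->
  repl u n L R u0 E1 E2 D = Some D' -> wf u D' = Some v /\ interp D (id2 K (wd u)) = interp D' (id2 K (wd u)).
Proof.
  intros (HE1 & HE2 & HE) Hw. unfold repl.
  destruct (wf u (firstn n D)) as [u1|] eqn:Hp; try discriminate.
  destruct (weqb u1 (L ++ u0 ++ R) && lseqb (firstn (length E1) (skipn n D)) (map (whisk L R) E1)) eqn:Hc; try discriminate.
  apply andb_prop in Hc; destruct Hc as [Hc1 Hc2]. apply weqb_eq in Hc1; apply lseqb_eq in Hc2; subst u1.
  intro HD; inversion HD; subst D'; clear HD.
  assert (ED : D = firstn n D ++ map (whisk L R) E1 ++ skipn (length E1) (skipn n D)).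
  { rewrite <- Hc2, firstn_skipn, firstn_skipn. reflexivity. }
  rewrite ED in Hw. rewrite wf_app, Hp, wf_app, (wf_whisk L R E1 _ HE1) in Hw.
  split.
  - rewrite wf_app, Hp, wf_app, (wf_whisk L R E2 _ HE2). exact Hw.
  - rewrite ED at 1. rewrite !interp_app.
    assert (Hty : ty (interp (firstn n D) (id2 K (wd u))) u (L ++ u0 ++ R)) by (eapply interp_ty; eauto with tyd).
    erewrite interp_whisk_vc; [ | exact HE1 | exact Hty]. erewrite interp_whisk_vc; [ | exact HE2 | exact Hty]. rewrite HE. reflexivity.
Qed.

Lemma step u v u0 v0 E1 E2 D D1 D2 Dt ns n L R : deq u0 v0 E1 E2 -> wf u D = Some v ->
  swaps ns D = Some D1 -> repl u n L R u0 E1 E2 D1 = Some D2 -> deq u v D2 Dt -> deq u v D Dt.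
Proof.
  intros HE Hw Hs Hr (H1 & H2 & H3).
  destruct (@swaps_sound ns D u v D1 Hw Hs) as [Hw1 Hi1].
  destruct (@repl_sound u0 v0 E1 E2 u v n L R D1 D2 HE Hw1 Hr) as [_ Hi2].
  split; [exact Hw|split; [exact H2|]].
  rewrite (Hi1 _ _ (ty_id u)), Hi2. exact H3.
Qed.

Lemma fin u v D Dt ns : wf u D = Some v -> swaps ns D = Some Dt -> deq u v D Dt.
Proof.
  intros Hw Hs. destruct (@swaps_sound ns D u v Dt Hw Hs) as [H1 H2].
  split; [exact Hw|split; [exact H1|]]. apply (H2 _ _ (ty_id u)).
Qed.

Lemma deq_sym u v D1 D2 : deq u v D1 D2 -> deq u v D2 D1.
Proof. intros (H1 & H2 & H3); repeat split; auto. Qed.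
Lemma deq_trans u v D1 D2 D3 : deq u v D1 D2 -> deq u v D2 D3 -> deq u v D1 D3.
Proof. intros (H1 & H2 & H3) (H4 & H5 & H6); repeat split; auto. congruence. Qed.


Definition rf a u v D := wf u D = Some v /\ a = interp D (id2 K (wd u)).

Lemma rf_ty a u v D : rf a u v D -> ty a u v.
Proof. intros [H1 H2]; subst. eapply interp_ty; eauto with tyd. Qed.

Lemma rf_gen g : rf (val g) (gdom g) (gcod g) [([], g, [])].
Proof.
  split.
  - destruct g; reflexivity.
  - change (val g = vc (lay ([], g, [])) (id2 K (wd (gdom g)))).
    assert (T : ty (lay ([], g, [])) (gdom g) (gcod g)).
    { pose proof (ty_lay ([], g, [])) as T; simpl in T; rewrite !app_nil_r in T; exact T. }
    rewrite (vc_id_r T). simpl.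
    change (val g = wl (wd []) (wr (val g) (wd []))). rewrite (wr_nil (Hval g)), (wl_nil (Hval g)). reflexivity.
Qed.

Lemma rf_vc a b u v1 v2 w Da Db : rf b u v1 Db -> rf a v2 w Da -> v1 = v2 -> rf (vc a b) u w (Db ++ Da).
Proof.
  intros [H1 H2] [H3 H4] <-. split.
  - rewrite wf_app, H1; auto.
  - rewrite interp_app. subst. erewrite (interp_vc Da (acc := interp Db (id2 K (wd u)))); [reflexivity| exact H3 |].
    eapply interp_ty; eauto with tyd.
Qed.

Lemma rf_wl f a L u v Da : rep f L -> rf a u v Da -> rf (wl f a) (L ++ u) (L ++ v) (map (whisk L []) Da).
Proof.
  intros Hf [H1 H2]; unfold rep in Hf; subst. split.
  - pose proof (wf_whisk L [] Da _ H1) as HH. rewrite !app_nil_r in HH. exact HH.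
  - assert (E : id2 K (wd (L ++ u)) = wl (wd L) (wr (id2 K (wd u)) (wd []))).
    { rewrite wr_id, wl_id, app_nil_r; reflexivity. }
    rewrite E. erewrite interp_whisk; [ | exact H1 | apply ty_id].
    rewrite (wr_nil (interp_ty Da H1 (ty_id u))). reflexivity.
Qed.

Lemma rf_wr f a R u v Da : rep f R -> rf a u v Da -> rf (wr a f) (u ++ R) (v ++ R) (map (whisk [] R) Da).
Proof.
  intros Hf [H1 H2]; unfold rep in Hf; subst. split.
  - pose proof (wf_whisk [] R Da _ H1) as HH. exact HH.
  - assert (E : id2 K (wd (u ++ R)) = wl (wd []) (wr (id2 K (wd u)) (wd R))).
    { rewrite wr_id, wl_id; reflexivity. }
    rewrite E. erewrite interp_whisk; [ | exact H1 | apply ty_id].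
    rewrite (wl_nil (ty_wr R (interp_ty Da H1 (ty_id u)))). reflexivity.
Qed.

Lemma rf_id f L : rep f L -> rf (id2 K f) L L [].
Proof. intro Hf; unfold rep in Hf; subst. split; reflexivity. Qed.


Lemma rf_hc a c u1 v1 u2 v2 Da Dc : rf a u1 v1 Da -> rf c u2 v2 Dc ->
  rf (hcomp K a c) (u1 ++ u2) (v1 ++ v2) (map (whisk [] u2) Da ++ map (whisk v1 []) Dc).
Proof.
  intros Ha Hc.
  rewrite (proj1 (hc_split (rf_ty Ha) (rf_ty Hc))).
  eapply rf_vc; [ eapply rf_wr; [apply rep_wd | exact Ha] | eapply rf_wl; [apply rep_wd | exact Hc] | reflexivity].
Qed.

Lemma rf_deq a1 a2 u v D1 D2 : rf a1 u v D1 -> rf a2 u v D2 -> a1 = a2 -> deq u v D1 D2.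
Proof. intros [H1 H2] [H3 H4] E; subst; repeat split; auto. Qed.

Lemma deq_eq a1 a2 u v D1 D2 : rf a1 u v D1 -> rf a2 u v D2 -> deq u v D1 D2 -> a1 = a2.
Proof. intros [H1 H2] [H3 H4] (_ & _ & E); subst; congruence. Qed.

Lemma step_sw u v n D D1 Dt : wf u D = Some v -> swap_at n D = Some D1 -> deq u v D1 Dt -> deq u v D Dt.
Proof.
  intros Hw Hs Hd. eapply deq_trans; [|exact Hd].
  apply (@fin u v D D1 [n]); auto. simpl. rewrite Hs. reflexivity.
Qed.

Ltac reify := lazymatch goal with |- rf ?a ?u ?v ?D =>
  lazymatch a with
  | vc _ _ => eapply rf_vc; [reify | reify | vm_compute; reflexivity]
  | wl _ _ => eapply rf_wl; [rep_t | reify]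
  | wr _ _ => eapply rf_wr; [rep_t | reify]
  | hcomp _ _ _ => eapply rf_hc; [reify | reify]
  | id2 _ _ => eapply rf_id; rep_t
  | _ => first [ exact (rf_gen Mu) | exact (rf_gen Eta) | exact (rf_gen Psi) | exact (rf_gen Nu)
               | exact (rf_gen Th) | exact (rf_gen Tht) ]
  end end.

Ltac normrf R :=
  let T := type of R in
  lazymatch T with rf ?a ?u ?v ?D =>
    let u' := eval vm_compute in u in
    let v' := eval vm_compute in v in
    let D' := eval vm_compute in D in
    change (rf a u' v' D') in R end.

Ltac mkdeq H name :=
  lazymatch type of H with ?a1 = ?a2 =>
    let R1 := fresh "RR" in
    eassert (R1 : rf a1 _ _ _) by reify;
    let R2 := fresh "RR" in
    eassert (R2 : rf a2 _ _ _) by reify;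
    normrf R1; normrf R2;
    pose proof (rf_deq R1 R2 H) as name; clear R1 R2
  end.

Ltac goaldeq :=
  lazymatch goal with |- ?a1 = ?a2 =>
    let R1 := fresh "RR" in
    eassert (R1 : rf a1 _ _ _) by reify;
    let R2 := fresh "RR" in
    eassert (R2 : rf a2 _ _ _) by reify;
    normrf R1; normrf R2;
    apply (deq_eq R1 R2); clear R1 R2
  end.


Ltac rwdn H sk :=
  lazymatch type of H with deq ?u0 ?v0 ?E1 ?E2 =>
  lazymatch goal with |- deq ?u ?v ?D ?Dt =>
    let p := eval vm_compute in (find_plan2 E1 D sk) in
    lazymatch p with
    | Some (?ns, ?n, ?L, ?R) =>
      eapply (@step u v u0 v0 E1 E2 D _ _ Dt ns n L R H);
      [vm_compute; reflexivity | vm_compute; reflexivity | vm_compute; reflexivity | ]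
    | None => fail "rwd: no match"
    end end end.
Ltac rwd H := rwdn H 0.
Ltac rwdr H := apply deq_sym; rwd H; apply deq_sym.

Ltac dfin :=
  lazymatch goal with |- deq ?u ?v ?D ?Dt =>
    let p := eval vm_compute in (align D Dt) in
    lazymatch p with
    | Some ?ns => apply (@fin u v D Dt ns); vm_compute; reflexivity
    | None => fail "dfin: cannot align"
    end end.

Ltac sw n := lazymatch goal with |- deq ?u ?v ?D ?Dt =>
  eapply (@step_sw u v n D _ Dt); [vm_compute; reflexivity | vm_compute; reflexivity | ] end.



Ltac dnorm :=
  lazymatch goal with |- deq ?u ?v ?D ?Dt =>
    let p := eval vm_compute in (fst (lnf D)) in
    eapply deq_trans; [apply (@fin u v D _ p); vm_compute; reflexivity |] end.
Ltac dnormr := apply deq_sym; dnorm; apply deq_sym.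
Ltac dfin2 := dnorm; dnormr; dfin.

Ltac rwb H := repeat rwd H; apply deq_sym; repeat rwd H; apply deq_sym.
Ltac pg := match goal with |- ?G => idtac G end.
Definition ThetaF (mu psi nu : C2 K) : C2 K :=
  vc (vc (vc (wl s mu) (wr (wl s mu) t)) (wr nu (c1 t t))) (wr (wl s psi) t).
Definition PsiG (mu eta th Th : C2 K) : C2 K :=
  vc (vc Th (wr (vc (wl s mu) (wr th t)) (c1 s t))) (wl (c1 t s) eta).
Definition NuG (eta Th : C2 K) : C2 K :=
  vc (vc Th (wr (wl s eta) (c1 s t))) (wl (c1 s s) eta).

Lemma dir1 : is_monad k t (val Mu) (val Eta) ->
  EMw_monad k t (val Mu) (val Eta) s (val Psi, val Nu, val Th) ->
  val Tht = ThetaF (val Mu) (val Psi) (val Nu) ->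
  st_premonad k t (val Mu) s (val Tht, val Th) /\
  PsiG (val Mu) (val Eta) (val Th) (val Tht) = val Psi /\ NuG (val Eta) (val Tht) = val Nu.
Proof.
  intros HM HE HT.
  destruct HM as (_ & _ & _ & _ & M1 & M2 & M3).
  unfold EMw_monad, em_1cell, em_2cell, em_vcomp, em_hcomp, em_id2 in HE.
  destruct HE as ((_ & _ & _ & EA) & (_ & EB & EC) & (_ & ED & EE) & EF & EG & EH).
  unfold ThetaF in HT.
  mkdeq M1 DM1. mkdeq M2 DM2. mkdeq M3 DM3.
  mkdeq EA DA. mkdeq EB DB. mkdeq EC DC. mkdeq ED DD. mkdeq EE DE. mkdeq EF DF. mkdeq EG DG. mkdeq EH DH.
  mkdeq HT DT.
  clear M1 M2 M3 EA EB EC ED EE EF EG EH HT.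
  assert (Lepsi : deq [AT;AS] [AS;AT] [([],Psi,[]); ([],Eta,[AS;AT]); ([],Psi,[AT]); ([AS],Mu,[])] [([],Psi,[])]).
  { rwd DA. rwd DM2. dfin. }
  assert (Lemu : deq [AS;AT;AT] [AS;AT] [([AS],Mu,[]); ([],Eta,[AS;AT]); ([],Psi,[AT]); ([AS],Mu,[])]
     [([],Eta,[AS;AT;AT]); ([],Psi,[AT;AT]); ([AS],Mu,[AT]); ([AS],Mu,[])]).
  { dnorm. rwd (deq_sym DM1). dfin. }
  assert (Re : deq [AS] [AS;AT] [([AS],Th,[]); ([],Nu,[AT]); ([AS],Mu,[]); ([],Eta,[AS;AT]); ([],Psi,[AT]); ([AS],Mu,[])]
      [([AS],Th,[]); ([],Nu,[AT]); ([AS],Mu,[])]).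
  { rwd Lemu. rwd (deq_sym DC). dfin. }
  assert (GR : deq [AS] [AS;AT] [([AS],Th,[]); ([],Nu,[AT]); ([AS],Mu,[])] [([],Eta,[AS]); ([],Psi,[])]).
  { apply deq_sym. rwd (deq_sym DH). rwd DD. dnorm. rwd (deq_sym DM1). sw 1. rwd DB. rwd DM1. sw 3. apply deq_sym; rwd (deq_sym Re); apply deq_sym. dfin. }
  assert (GG : deq [AS] [AS;AT] [([],Th,[AS]); ([AS],Psi,[]); ([],Nu,[AT]); ([AS],Mu,[])] [([],Eta,[AS]); ([],Psi,[])]).
  { apply deq_sym. rwd (deq_sym DG). rwd Lepsi. dfin. }
  assert (LP : deq [AS;AT] [AS;AT] [([],Th,[AS;AT]); ([AS],Psi,[AT]); ([],Nu,[AT;AT]); ([AS],Mu,[AT]); ([AS],Mu,[])]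
     [([],Eta,[AS;AT]); ([],Psi,[AT]); ([AS],Mu,[])]).
  { rwd GG. dfin. }
  assert (LE2 : deq [AS;AT] [AS;AT] [([AS;AT],Th,[]); ([AS],Psi,[AT]); ([],Nu,[AT;AT]); ([AS],Mu,[AT]); ([AS],Mu,[])]
     [([],Eta,[AS;AT]); ([],Psi,[AT]); ([AS],Mu,[])]).
  { rwd DM1. sw 2. rwd (deq_sym DD). sw 1. rwd (deq_sym DM1). rwd GR. dfin. }
  assert (LT0e : deq [AS;AT;AS] [AS;AT] [([],Eta,[AS;AT;AS]); ([],Psi,[AT;AS]); ([AS],Mu,[AS]); ([AS],Psi,[]); ([],Nu,[AT]); ([AS],Mu,[])]
     [([AS],Psi,[]); ([],Nu,[AT]); ([AS],Mu,[])]).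
  { rwd (deq_sym DA). sw 1. sw 4. rwd (deq_sym DM1). rwd DB. sw 0. sw 1. rwd (deq_sym DC). dfin. }
  assert (NN : deq [AT;AS;AS;AS] [AS;AT]
     [([],Psi,[AS;AS]); ([AS],Psi,[AS]); ([AS;AS],Psi,[]); ([AS],Nu,[AT]); ([],Nu,[AT;AT]); ([AS],Mu,[AT]); ([AS],Mu,[])]
     [([AT;AS],Nu,[]); ([AT],Nu,[AT]); ([AT;AS],Mu,[]); ([],Psi,[AT]); ([AS],Mu,[])]).
  { rwd DM1. sw 4. rwd DB. sw 0. sw 3. rwd (deq_sym DM1). rwd DB. rwd DM1. sw 2. dfin. }
  assert (Ne : deq [AS;AS;AS] [AS;AT] [([AS],Nu,[]); ([],Nu,[AT]); ([AS],Mu,[]); ([],Eta,[AS;AT]); ([],Psi,[AT]); ([AS],Mu,[])]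
     [([AS],Nu,[]); ([],Nu,[AT]); ([AS],Mu,[])]).
  { rwd Lemu. rwd (deq_sym DC). dfin. }
  assert (NF : deq [AS;AS;AS] [AS;AT] [([AS],Nu,[]); ([],Nu,[AT]); ([AS],Mu,[])]
     [([],Nu,[AS]); ([AS],Psi,[]); ([],Nu,[AT]); ([AS],Mu,[])]).
  { apply deq_sym. rwd (deq_sym Lepsi). rwd DF. sw 5. rwd (deq_sym DM1). rwd NN. sw 0. sw 1. sw 2. rwd Ne. dfin. }
  split; [split; [split; [|split; [|split; [|split; [|split; [|split; [|split]]]]]]|]|split].
  - eapply rep_dom; rep_t.
  - eapply rep_cod; rep_t.
  - eapply ty_cell; [| rep_t | rep_t]; apply Hval.
  - eapply ty_cell; [| rep_t | rep_t]; apply Hval.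
  - goaldeq. rwb DT. rwd (deq_sym DA). sw 2. rwd (deq_sym DA). sw 1. sw 2. sw 6. sw 5. rwd (deq_sym DM1). rwd (deq_sym DM1). rwd (deq_sym NF). apply deq_sym. sw 3. sw 2. sw 4. sw 3. repeat rwd (deq_sym DM1). rwd DM1. rwd (deq_sym DB). sw 4. repeat rwd (deq_sym DM1). dfin.
  - goaldeq. rwb DT. rwd LP. rwdr LE2. dfin.
  - goaldeq. rwb DT. rwd LE2. rwd (deq_sym DE). dfin.
  - goaldeq. rwb DT. rwd LP. rwd LT0e. dfin.
  - goaldeq. rwb DT. sw 0. sw 1. sw 2. rwd (deq_sym DM1). dfin.
  - unfold PsiG. goaldeq. rwb DT. dnorm. rwd DM3. rwd (deq_sym DA). sw 0. sw 3. rwd (deq_sym DM1). rwd LP. rwd Lepsi. dfin.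
  - unfold NuG. goaldeq. rwb DT. dnorm. rwd DM3. rwd (deq_sym GR). sw 2. rwd (deq_sym DM1). rwd NF. sw 0. rwd LE2. rwd (deq_sym DC). dfin.
Qed.

Lemma dir2 : is_monad k t (val Mu) (val Eta) ->
  st_premonad k t (val Mu) s (val Tht, val Th) ->
  val Psi = PsiG (val Mu) (val Eta) (val Th) (val Tht) ->
  val Nu = NuG (val Eta) (val Tht) ->
  EMw_monad k t (val Mu) (val Eta) s (val Psi, val Nu, val Th) /\
  ThetaF (val Mu) (val Psi) (val Nu) = val Tht.
Proof.
  intros HM HP HPs HN.
  destruct HM as (_ & _ & _ & _ & M1 & M2 & M3).
  destruct HP as ((_ & _ & _ & _ & P1 & P2 & P3 & P4) & PL).
  unfold PsiG in HPs. unfold NuG in HN.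
  mkdeq M1 DM1. mkdeq M2 DM2. mkdeq M3 DM3.
  mkdeq P1 DP1. mkdeq P2 DP2. mkdeq P3 DP3. mkdeq P4 DP4. mkdeq PL DL.
  mkdeq HPs DPs. mkdeq HN DN.
  clear M1 M2 M3 P1 P2 P3 P4 PL HPs HN.
  assert (EO : deq [AS;AT;AS;AT] [AS;AT] [([],Tht,[]); ([],Th,[AS;AT]); ([],Tht,[])] [([],Tht,[])]).
  { sw 0. rwd (deq_sym DP1). rwd DP4. dfin. }
  assert (Eth : deq [] [AS;AT] [([],Th,[]); ([],Th,[AS;AT]); ([],Tht,[])] [([],Th,[])]).
  { rwd DP2. rwd DP3. dfin. }
  assert (OEr : deq [AS;AT;AS;AT] [AS;AT] [([AS;AT],Th,[AS;AT]); ([AS;AT],Tht,[]); ([],Tht,[])] [([],Tht,[])]).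
  { rwd (deq_sym DP1). rwd (deq_sym DP2). rwd DP4. dfin. }
  assert (Esmu : deq [AS;AT;AT] [AS;AT] [([AS],Mu,[]); ([],Th,[AS;AT]); ([],Tht,[])] [([],Th,[AS;AT;AT]); ([],Tht,[AT]); ([AS],Mu,[])]).
  { sw 0. rwd DL. dfin. }
  assert (EPh : deq [AT] [AS;AT] [([],Th,[AT]); ([AS],Mu,[]); ([],Th,[AS;AT]); ([],Tht,[])] [([],Th,[AT]); ([AS],Mu,[])]).
  { rwd Esmu. rwd Eth. dfin. }
  assert (OPh : deq [AS;AT;AT] [AS;AT] [([AS;AT],Th,[AT]); ([AS;AT;AS],Mu,[]); ([],Tht,[])] [([],Th,[AS;AT;AT]); ([],Tht,[AT]); ([AS],Mu,[])]).
  { rwd DL. rwd (deq_sym DP2). dfin. }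
  assert (Phm : deq [AT;AT] [AS;AT] [([],Th,[AT;AT]); ([AS],Mu,[AT]); ([AS;AT],Th,[AT]); ([AS;AT;AS],Mu,[]); ([],Tht,[])]
      [([],Mu,[]); ([],Th,[AT]); ([AS],Mu,[])]).
  { rwd OPh. rwd EPh. rwd DM1. sw 0. dfin. }
  assert (XE : deq [AS;AT] [AS;AT] [([AS],Eta,[AT]); ([],Th,[AS;AT;AT]); ([],Tht,[AT]); ([AS],Mu,[])] [([],Th,[AS;AT]); ([],Tht,[])]).
  { rwd (deq_sym Esmu). rwd DM2. dfin. }
  assert (DA : deq [AT;AT;AS] [AS;AT] [([AT],Psi,[]); ([],Psi,[AT]); ([AS],Mu,[])] [([],Mu,[AS]); ([],Psi,[])]).
  { rwb DPs. dnorm. dnormr. rwd (deq_sym DL). rwd DM2. rwd (deq_sym DP1). rwd Phm. dfin2. }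
  assert (DB : deq [AT;AS;AS] [AS;AT] [([],Psi,[AS]); ([AS],Psi,[]); ([],Nu,[AT]); ([AS],Mu,[])] [([AT],Nu,[]); ([],Psi,[AT]); ([AS],Mu,[])]).
  { rwb DPs. rwb DN. dnorm. dnormr. rwb (deq_sym DL). rwb DM2. rwb (deq_sym DP1). sw 6. sw 5. rwd OPh. sw 4. rwd XE. rwd DP4. dfin2. }
  assert (DC : deq [AS;AS] [AS;AT] [([],Nu,[])] [([],Nu,[]); ([],Eta,[AS;AT]); ([],Psi,[AT]); ([AS],Mu,[])]).
  { rwb DPs. rwb DN. dnorm. dnormr. rwb (deq_sym DL). rwb DM2. rwb (deq_sym DP1). apply deq_sym. rwd DM3. sw 0. sw 1. rwd DP4. dfin2. }
  assert (DD : deq [AT] [AS;AT] [([],Th,[AT]); ([AS],Mu,[])] [([AT],Th,[]); ([],Psi,[AT]); ([AS],Mu,[])]).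
  { rwb DPs. rwb DN. dnorm. dnormr. rwb (deq_sym DL). rwb DM2. rwb (deq_sym DP1). apply deq_sym. rwd (deq_sym DP2). rwd EPh. dfin. }
  assert (DE : deq [] [AS;AT] [([],Th,[])] [([],Th,[]); ([],Eta,[AS;AT]); ([],Psi,[AT]); ([AS],Mu,[])]).
  { rwb DPs. rwb DN. dnorm. dnormr. rwb (deq_sym DL). rwb DM2. rwb (deq_sym DP1). apply deq_sym. rwd DM3. rwd DP3. dfin. }
  assert (Lepsi : deq [AT;AS] [AS;AT] [([],Psi,[]); ([],Eta,[AS;AT]); ([],Psi,[AT]); ([AS],Mu,[])] [([],Psi,[])]).
  { rwd DA. rwd DM2. dfin. }
  assert (K1 : deq [AS;AS;AT] [AS;AT] [([],Nu,[AT]); ([AS],Mu,[])] [([AS],Eta,[AS;AT]); ([],Tht,[])]).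
  { rwd DN. dnorm. rwd (deq_sym DL). rwd DM2. dfin. }
  assert (K2 : deq [AS;AT;AS] [AS;AT] [([AS],Psi,[]); ([AS],Eta,[AS;AT]); ([],Tht,[])] [([AS;AT;AS],Eta,[]); ([],Tht,[])]).
  { rwd DPs. dnorm. rwd (deq_sym DP1). sw 2. sw 1. rwd OPh. sw 0. rwd XE. rwd DP4. dfin2. }
  assert (Lemu : deq [AS;AT;AT] [AS;AT] [([AS],Mu,[]); ([],Eta,[AS;AT]); ([],Psi,[AT]); ([AS],Mu,[])]
     [([],Eta,[AS;AT;AT]); ([],Psi,[AT;AT]); ([AS],Mu,[AT]); ([AS],Mu,[])]).
  { dnorm. rwd (deq_sym DM1). dfin. }
  assert (NN : deq [AT;AS;AS;AS] [AS;AT]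
     [([],Psi,[AS;AS]); ([AS],Psi,[AS]); ([AS;AS],Psi,[]); ([AS],Nu,[AT]); ([],Nu,[AT;AT]); ([AS],Mu,[AT]); ([AS],Mu,[])]
     [([AT;AS],Nu,[]); ([AT],Nu,[AT]); ([AT;AS],Mu,[]); ([],Psi,[AT]); ([AS],Mu,[])]).
  { rwd DM1. sw 4. rwd DB. sw 0. sw 3. rwd (deq_sym DM1). rwd DB. rwd DM1. sw 2. dfin. }
  assert (Ne : deq [AS;AS;AS] [AS;AT] [([AS],Nu,[]); ([],Nu,[AT]); ([AS],Mu,[]); ([],Eta,[AS;AT]); ([],Psi,[AT]); ([AS],Mu,[])]
     [([AS],Nu,[]); ([],Nu,[AT]); ([AS],Mu,[])]).
  { rwd Lemu. rwd (deq_sym DC). dfin. }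
  assert (NF : deq [AS;AS;AS] [AS;AT] [([AS],Nu,[]); ([],Nu,[AT]); ([AS],Mu,[])]
     [([],Nu,[AS]); ([AS],Psi,[]); ([],Nu,[AT]); ([AS],Mu,[])]).
  { rwd K1. apply deq_sym. rwd K1. rwd K2. apply deq_sym. rwb DN. dnorm. dnormr. rwd (deq_sym DP1). dfin2. }
  unfold EMw_monad, em_1cell, em_2cell, em_vcomp, em_hcomp, em_id2.
  split; [split; [split; [|split; [|split]]|split; [split; [|split]|split; [split; [|split]|split; [|split]]]]|].
  all: try (eapply ty_cell; [| rep_t | rep_t]; apply Hval).
  all: try assumption.
  all: try (goaldeq; assumption).
  - goaldeq. rwd Lepsi. rwd (deq_sym NF). apply deq_sym. sw 5. rwd (deq_sym DM1). rwd NN. sw 0. sw 1. sw 2. rwd Ne. dfin.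
  - goaldeq. rwd Lepsi. rwd K1. rwd K2. apply deq_sym. rwd DPs. dnorm. rwd DM3. dfin.
  - goaldeq. rwd K1. sw 3. sw 2. rwd OPh. rwd XE. rwb DPs. rwd EO. dfin.
  - unfold ThetaF. goaldeq. rwb DPs. rwb DN. dnorm. rwd (deq_sym DL). rwd DM2. rwd (deq_sym DP1). sw 2. sw 1. rwd OPh. sw 0. rwd XE. rwd DP4. rwd (deq_sym DL). rwd DM2. dfin.
Qed.

End Val.
Definition mkval (mu eta psi nu th Th : C2 K) (g : gen) : C2 K :=
  match g with Mu => mu | Eta => eta | Psi => psi | Nu => nu | Th => th | Tht => Th end.

Lemma ty_eq a u v u' v' : ty a u v -> u = u' -> v = v' -> ty a u' v'.
Proof. intros H <- <-; exact H. Qed.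
Lemma ty_vc' a b u v1 v2 w : ty b u v1 -> ty a v2 w -> v1 = v2 -> ty (vc a b) u w.
Proof. intros H1 H2 <-; eapply ty_vc; eauto. Qed.
Lemma ty_wl' f L a u v : rep f L -> ty a u v -> ty (wl f a) (L ++ u) (L ++ v).
Proof. intros -> H; apply ty_wl; exact H. Qed.
Lemma ty_wr' f R a u v : rep f R -> ty a u v -> ty (wr a f) (u ++ R) (v ++ R).
Proof. intros -> H; apply ty_wr; exact H. Qed.
Lemma cell_ty a f g u v : Cell2 a f g -> rep f u -> rep g v -> ty a u v.
Proof. intros [H1 H2] E1 E2; unfold rep in *; split; congruence. Qed.

Ltac tyt := lazymatch goal with |- ty ?a ?u ?v =>
  lazymatch a with
  | vc _ _ => eapply ty_vc'; [tyt | tyt | reflexivity]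
  | wl _ _ => eapply ty_wl'; [rep_t | tyt]
  | wr _ _ => eapply ty_wr'; [rep_t | tyt]
  | _ => eassumption
  end end.

Lemma ty_ThetaF mu psi nu : ty mu [AT;AT] [AT] -> ty psi [AT;AS] [AS;AT] -> ty nu [AS;AS] [AS;AT] ->
  ty (ThetaF mu psi nu) [AS;AT;AS;AT] [AS;AT].
Proof. intros. unfold ThetaF. eapply ty_eq; [tyt | reflexivity | reflexivity]. Qed.
Lemma ty_PsiG mu eta th Th : ty mu [AT;AT] [AT] -> ty eta [] [AT] -> ty th [] [AS;AT] -> ty Th [AS;AT;AS;AT] [AS;AT] ->
  ty (PsiG mu eta th Th) [AT;AS] [AS;AT].
Proof. intros. unfold PsiG. eapply ty_eq; [tyt | reflexivity | reflexivity]. Qed.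
Lemma ty_NuG eta Th : ty eta [] [AT] -> ty Th [AS;AT;AS;AT] [AS;AT] ->
  ty (NuG eta Th) [AS;AS] [AS;AT].
Proof. intros. unfold NuG. eapply ty_eq; [tyt | reflexivity | reflexivity]. Qed.

Ltac cty H := eapply ty_eq; [eapply cell_ty; [exact H | rep_t | rep_t] | reflexivity | reflexivity].

Lemma Hv1 mu eta psi nu th : is_monad k t mu eta -> EMw_monad k t mu eta s (psi, nu, th) ->
  forall g, ty (mkval mu eta psi nu th (ThetaF mu psi nu) g) (gdom g) (gcod g).
Proof.
  intros HM Hx.
  destruct HM as (_ & _ & Cm & Ce & _).
  destruct Hx as ((_ & _ & Cp & _) & (Cn & _) & (Ct & _) & _).
  assert (Tm : ty mu [AT;AT] [AT]) by cty Cm.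
  assert (Te : ty eta [] [AT]) by cty Ce.
  assert (Tp : ty psi [AT;AS] [AS;AT]) by cty Cp.
  assert (Tn : ty nu [AS;AS] [AS;AT]) by cty Cn.
  assert (Tt : ty th [] [AS;AT]) by cty Ct.
  intro g; destruct g; simpl; auto. apply ty_ThetaF; auto.
Qed.

Lemma Hv2 mu eta Th th : is_monad k t mu eta -> st_premonad k t mu s (Th, th) ->
  forall g, ty (mkval mu eta (PsiG mu eta th Th) (NuG eta Th) th Th g) (gdom g) (gcod g).
Proof.
  intros HM Hy.
  destruct HM as (_ & _ & Cm & Ce & _).
  destruct Hy as ((_ & _ & CT & Ct & _) & _).
  assert (Tm : ty mu [AT;AT] [AT]) by cty Cm.
  assert (Te : ty eta [] [AT]) by cty Ce.
  assert (TT : ty Th [AS;AT;AS;AT] [AS;AT]) by cty CT.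
  assert (Tt : ty th [] [AS;AT]) by cty Ct.
  intro g; destruct g; simpl; auto. apply ty_PsiG; auto. apply ty_NuG; auto.
Qed.

Lemma Fok mu eta (HM : is_monad k t mu eta) x : EMw_monad k t mu eta s x ->
  st_premonad k t mu s (ThetaF mu (fst (fst x)) (snd (fst x)), snd x).
Proof.
  destruct x as [[psi nu] th]; simpl. intro Hx.
  exact (proj1 (@dir1 (mkval mu eta psi nu th (ThetaF mu psi nu)) (Hv1 HM Hx) HM Hx eq_refl)).
Qed.

Lemma Gok mu eta (HM : is_monad k t mu eta) y : st_premonad k t mu s y ->
  EMw_monad k t mu eta s (PsiG mu eta (snd y) (fst y), NuG eta (fst y), snd y).
Proof.
  destruct y as [Th th]; simpl. intro Hy.
  exact (proj1 (@dir2 (mkval mu eta (PsiG mu eta th Th) (NuG eta Th) th Th) (Hv2 HM Hy) HM Hy eq_refl eq_refl)).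
Qed.

Lemma sig_ext (T : Type) (P : T -> Prop) (x y : {a | P a}) : proj1_sig x = proj1_sig y -> x = y.
Proof. destruct x as [x px], y as [y py]; simpl; intros ->. f_equal. apply proof_irrelevance. Qed.

Lemma main_core (mu eta : C2 K) :
  is_monad k t mu eta ->
  exists (F : {x : C2 K * C2 K * C2 K | EMw_monad k t mu eta s x} ->
              {y : C2 K * C2 K | st_premonad k t mu s y})
         (G : {y : C2 K * C2 K | st_premonad k t mu s y} ->
              {x : C2 K * C2 K * C2 K | EMw_monad k t mu eta s x}),
    (forall x, G (F x) = x) /\ (forall y, F (G y) = y) /\
    (forall x, snd (proj1_sig (F x)) = snd (proj1_sig x)).
Proof.
  intro HM.
  exists (fun x : {x : C2 K * C2 K * C2 K | EMw_monad k t mu eta s x} => exist (fun y => st_premonad k t mu s y) (ThetaF mu (fst (fst (proj1_sig x))) (snd (fst (proj1_sig x))), snd (proj1_sig x)) (Fok HM (proj1_sig x) (proj2_sig x))).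
  exists (fun y : {y : C2 K * C2 K | st_premonad k t mu s y} => exist (fun x => EMw_monad k t mu eta s x) (PsiG mu eta (snd (proj1_sig y)) (fst (proj1_sig y)), NuG eta (fst (proj1_sig y)), snd (proj1_sig y)) (Gok HM (proj1_sig y) (proj2_sig y))).
  split; [|split].
  - intros [[[psi nu] th] Hx]. apply sig_ext; simpl.
    destruct (@dir1 (mkval mu eta psi nu th (ThetaF mu psi nu)) (Hv1 HM Hx) HM Hx eq_refl) as [_ [E1 E2]].
    simpl in E1, E2. rewrite E1, E2. reflexivity.
  - intros [[Th th] Hy]. apply sig_ext; simpl.
    destruct (@dir2 (mkval mu eta (PsiG mu eta th Th) (NuG eta Th) th Th) (Hv2 HM Hy) HM Hy eq_refl eq_refl) as [_ E].
    simpl in E. rewrite E. reflexivity.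
  - intros [[[psi nu] th] Hx]. reflexivity.
Qed.

End Eng.


Unset Implicit Arguments.

Theorem theorem2p3 (K : TwoCat) (k : Ob K) (t : H1 K) (mu eta : C2 K) (s : H1 K) :
  is_monad k t mu eta -> dom K s = k -> cod K s = k ->
  exists (F : {x : C2 K * C2 K * C2 K | EMw_monad k t mu eta s x} ->
              {y : C2 K * C2 K | st_premonad k t mu s y})
         (G : {y : C2 K * C2 K | st_premonad k t mu s y} ->
              {x : C2 K * C2 K * C2 K | EMw_monad k t mu eta s x}),
    (forall x, G (F x) = x) /\ (forall y, F (G y) = y) /\
    (* the correspondence keeps the unit 2-cell *)
    (forall x, snd (proj1_sig (F x)) = snd (proj1_sig x)).
Proof.
  intros HM Hsd Hsc.
  pose proof HM as HM'. destruct HM' as (Htd & Htc & _).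
  exact (@main_core K k s t Hsd Hsc Htd Htc mu eta HM).
Qed.
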